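(* Let $\zeta$ be the Riemann zeta function. Then $$\lim_{x\to\infty}2^x\bigl[\ln\zeta(\ln\zeta(x)+1)-\ln\zeta(\zeta(x))\bigr]=\frac12 .$$ *)

(* Defs.v *)
From Stdlib Require Import Reals.
From Coquelicot Require Import Coquelicot.
Open Scope R_scope.

(* For s <= 1 the Coquelicot total operator Series returns a junk value;
   this is irrelevant for the limit below (all arguments are > 1 for x > 1). *)
Definition zeta (s : R) : R := Series (fun n : nat => Rpower (INR (S n)) (- s)).

(* Main.v *)
Require Import Defs.
From Stdlib Require Import Reals.
From Coquelicot Require Import Coquelicot.
From Stdlib Require Import Lra Psatz.
Open Scope R_scope.

Lemma ln_le_m1 y : 0 < y -> ln y <= y - 1.
Proof.
  intros Hy. rewrite <- (ln_exp (y - 1)). apply ln_le; [exact Hy|].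
  pose proof (exp_ineq1_le (y-1)). lra.
Qed.

Lemma Lg n : 0 < INR (S n).
Proof. apply lt_0_INR; lia. Qed.

Definition L n := ln (INR (S n)).

Lemma L_gap n : 1 / (INR (S n) + 1) <= L (S n) - L n <= 1 / INR (S n).
Proof.
  unfold L. pose proof (Lg n) as Hm.
  assert (INR (S (S n)) = INR (S n) + 1) as Hs by (rewrite S_INR; reflexivity).
  rewrite Hs. set (m := INR (S n)) in *.
  split.
  - assert (Hp : 0 < m/(m+1)) by (apply Rdiv_lt_0_compat; lra).
    pose proof (ln_le_m1 (m / (m+1)) Hp) as H.
    rewrite ln_div in H by lra.
    assert (m/(m+1) - 1 = - (1/(m+1))) by (field; intro; lra). lra.
  - assert (Hp : 0 < (m+1)/m) by (apply Rdiv_lt_0_compat; lra).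
    pose proof (ln_le_m1 ((m+1)/m) Hp) as H.
    rewrite ln_div in H by lra.
    assert ((m+1)/m - 1 = 1/m) by (field; intro; lra). lra.
Qed.

Lemma expL n : exp (- L n) = / INR (S n).
Proof. unfold L. rewrite exp_Ropp, exp_ln by apply Lg. reflexivity. Qed.

Lemma teleA r n : 0 < r ->
  (exp (- r * L n) - exp (- r * L (S n))) / r <= exp (- (r+1) * L n).
Proof.
  intros Hr. pose proof (L_gap n) as [G1 G2]. pose proof (Lg n) as Hm.
  set (m := INR (S n)) in *.
  replace (- (r+1) * L n) with (- r * L n + - L n) by ring.
  rewrite exp_plus, expL. fold m.
  replace (- r * L (S n)) with (- r * L n + - r * (L (S n) - L n)) by ring.
  rewrite exp_plus.
  pose proof (exp_ineq1_le (- r * (L (S n) - L n))) as H.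
  pose proof (exp_pos (- r * L n)) as He.
  set (E := exp (- r * L n)) in *.
  set (D := L (S n) - L n) in *.
  apply Rmult_le_reg_r with r; [lra|].
  unfold Rdiv. rewrite Rmult_assoc, Rinv_l by lra. rewrite Rmult_1_r.
  assert (r * D <= r * (1/m)) by (apply Rmult_le_compat_l; lra).
  assert (E * (1 - r*D) <= E * exp (- r * D)) by (apply Rmult_le_compat_l; lra).
  assert (E * (r * / m) = E * (r * (1/m))) by (unfold Rdiv; ring).
  nra.
Qed.

Lemma teleB r n : 0 < r ->
  exp (- (r+1) * L (S n)) <= (exp (- r * L n) - exp (- r * L (S n))) / r.
Proof.
  intros Hr. pose proof (L_gap n) as [G1 G2]. pose proof (Lg (S n)) as Hm.
  assert (INR (S (S n)) = INR (S n) + 1) as Hs by (rewrite S_INR; reflexivity).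
  replace (- (r+1) * L (S n)) with (- r * L (S n) + - L (S n)) by ring.
  rewrite exp_plus, expL, Hs. rewrite Hs in Hm.
  set (m1 := INR (S n) + 1) in *.
  replace (- r * L n) with (- r * L (S n) + r * (L (S n) - L n)) by ring.
  rewrite exp_plus.
  pose proof (exp_ineq1_le (r * (L (S n) - L n))) as H.
  pose proof (exp_pos (- r * L (S n))) as He.
  set (E := exp (- r * L (S n))) in *.
  set (D := L (S n) - L n) in *.
  apply Rmult_le_reg_r with r; [lra|].
  unfold Rdiv. rewrite (Rmult_assoc _ (/ r)), Rinv_l by lra. rewrite Rmult_1_r.
  assert (r * (1/m1) <= r * D) by (apply Rmult_le_compat_l; lra).
  assert (E * (1 + r*D) <= E * exp (r * D)) by (apply Rmult_le_compat_l; lra).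
  assert (E * / m1 * r = E * (r * (1/m1))) by (unfold Rdiv; ring).
  nra.
Qed.

Lemma L0 : L 0 = 0.
Proof. unfold L. simpl. apply ln_1. Qed.

Lemma L_pos n : 0 <= L n.
Proof. unfold L. rewrite <- ln_1. destruct n. simpl; lra.
  left. apply ln_increasing; [lra|]. apply lt_1_INR. lia. Qed.

Lemma Lmono n : L n < L (S n).
Proof. unfold L. apply ln_increasing. apply Lg. apply lt_INR. lia. Qed.

Lemma exp_neg_lim r : 0 < r -> is_lim_seq (fun n => exp (- r * L n)) 0.
Proof.
  intros Hr. apply is_lim_seq_spec. intros eps.
  pose proof (cond_pos eps) as He.
  pose proof is_lim_seq_INR as HI. apply is_lim_seq_spec in HI.
  destruct (HI (exp (1 / (r * eps)))) as [N HN].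
  exists N. intros n Hn. specialize (HN n Hn).
  assert (HL : 1 / (r * eps) < L n).
  { unfold L. rewrite <- (ln_exp (1 / (r*eps))). apply ln_increasing. apply exp_pos.
    rewrite S_INR. lra. }
  rewrite Rminus_0_r, Rabs_pos_eq by (left; apply exp_pos).
  pose proof (exp_ineq1_le (r * L n)) as H1.
  assert (Hx : exp (- r * L n) * exp (r * L n) = 1).
  { rewrite <- exp_plus. replace (- r * L n + r * L n) with 0 by ring. apply exp_0. }
  assert (Hp : 0 < r * eps) by nra.
  assert (1 < r * eps * L n).
  { apply Rmult_lt_compat_l with (r := r*eps) in HL; [|exact Hp].
    unfold Rdiv in HL. rewrite Rmult_1_l, Rinv_r in HL by lra. lra. }
  pose proof (exp_pos (- r * L n)) as HE. pose proof (L_pos n).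
  set (E := exp (- r * L n)) in *. set (X := exp (r * L n)) in *.
  assert (E * (1 + r * L n) <= E * X) by (apply Rmult_le_compat_l; lra).
  assert (E * (r * L n) < 1) by nra.
  assert (0 < r * L n) by nra.
  destruct (Rlt_or_le E eps) as [?|Hc]; [assumption|].
  assert (eps * (r * L n) <= E * (r * L n)) by (apply Rmult_le_compat_r; lra).
  nra.
Qed.

Lemma telescope (e : nat -> R) : is_lim_seq e 0 ->
  is_series (fun n => e n - e (S n)) (e 0%nat).
Proof.
  intros He.
  assert (Hs : forall N, sum_n (fun n => e n - e (S n)) N = e 0%nat - e (S N)).
  { induction N. rewrite sum_O. reflexivity.
    rewrite sum_Sn, IHN. unfold plus; simpl. ring. }
  assert (H : is_lim_seq (sum_n (fun n => e n - e (S n))) (e 0%nat)).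
  { apply (is_lim_seq_ext (fun N => e 0%nat - e (S N))). intros; rewrite Hs; reflexivity.
    assert (H2 := is_lim_seq_minus' _ _ _ _ (is_lim_seq_const (e 0%nat)) (proj1 (is_lim_seq_incr_1 e 0) He)).
    rewrite Rminus_0_r in H2. exact H2. }
  exact H.
Qed.

Definition T s n := exp (- s * L n).

Lemma T_eq s : (fun n => Rpower (INR (S n)) (- s)) = T s.
Proof. reflexivity. Qed.

Lemma zeta_T s : zeta s = Series (T s).
Proof. reflexivity. Qed.

Definition tele r k n := (exp (- r * L (n+k)) - exp (- r * L (S (n+k)))) / r.

Lemma tele_series r k : 0 < r -> is_series (tele r k) (exp (- r * L k) / r).
Proof.
  intros Hr.
  assert (H : is_series (fun n => (/ r) * ((exp (- r * L (n+k)) - exp (- r * L (S (n+k)))))) (/r * (exp (- r * L (0+k))))).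
  { apply (is_series_scal_l (/r) (fun n => exp (- r * L (n+k)) - exp (- r * L (S (n+k))))).
    apply (telescope (fun n => exp (- r * L (n+k)))).
    apply (is_lim_seq_incr_n (fun n => exp (- r * L n)) k 0). apply exp_neg_lim; exact Hr. }
  replace (exp (- r * L k) / r) with (/r * (exp (- r * L (0+k)))) by (simpl; unfold Rdiv; ring).
  refine (is_series_ext _ (tele r k) _ _ H).
  intros n. unfold tele, Rdiv. simpl. ring.
Qed.

Lemma T_pos s n : 0 < T s n.
Proof. apply exp_pos. Qed.

Lemma ex_T s : 1 < s -> ex_series (T s).
Proof.
  intros Hs. apply ex_series_incr_1.
  apply (@ex_series_le R_AbsRing R_CompleteNormedModule _ (tele (s-1) 0)).
  - intros n. change (norm (T s (S n))) with (Rabs (T s (S n))).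
    rewrite Rabs_pos_eq by (left; apply T_pos).
    unfold T, tele. rewrite Nat.add_0_r.
    replace (-s) with (- (s - 1 + 1)) by ring. apply teleB. lra.
  - eexists. apply tele_series. lra.
Qed.

Lemma tail_bound s k : 1 < s ->
  Series (fun n => T s (S (n + k))) <= exp (- (s-1) * L k) / (s-1).
Proof.
  intros Hs.
  rewrite <- (is_series_unique _ _ (tele_series (s-1) k ltac:(lra))).
  apply Series_le.
  - intros n. split. left; apply T_pos.
    unfold T, tele. replace (-s) with (- (s - 1 + 1)) by ring. apply teleB. lra.
  - eexists. apply tele_series. lra.
Qed.

Lemma zeta_lower s : 1 < s -> 1 / (s-1) <= zeta s.
Proof.
  intros Hs. rewrite zeta_T.
  replace (1 / (s-1)) with (exp (- (s-1) * L 0) / (s-1)) by (rewrite L0, Rmult_0_r, exp_0; reflexivity).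
  rewrite <- (is_series_unique _ _ (tele_series (s-1) 0 ltac:(lra))).
  apply Series_le.
  - intros n. split.
    + unfold tele. pose proof (teleB (s-1) (n+0) ltac:(lra)).
      pose proof (exp_pos (- (s - 1 + 1) * L (S (n + 0)))). lra.
    + unfold T, tele. rewrite Nat.add_0_r. replace (-s) with (- (s - 1 + 1)) by ring. apply teleA. lra.
  - apply ex_T; exact Hs.
Qed.

Lemma T0 s : T s 0 = 1.
Proof. unfold T. rewrite L0, Rmult_0_r. apply exp_0. Qed.

Lemma zeta_upper s : 1 < s -> zeta s <= 1 + 1 / (s-1).
Proof.
  intros Hs. rewrite zeta_T, (Series_incr_1 _ (ex_T s Hs)), T0.
  pose proof (tail_bound s 0 Hs) as H. rewrite L0, Rmult_0_r, exp_0 in H.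
  rewrite (Series_ext _ (fun n => T s (S (n + 0)))). lra.
  intros n. rewrite Nat.add_0_r. reflexivity.
Qed.

Lemma L1 : L 1 = ln 2.
Proof. unfold L. f_equal; try (simpl; ring). Qed.

Lemma zeta_two s : 1 < s ->
  exp (- s * ln 2) <= zeta s - 1 <= exp (- s * ln 2) + exp (- (s-1) * ln 2) / (s-1).
Proof.
  intros Hs. rewrite zeta_T, (Series_incr_1 _ (ex_T s Hs)), T0.
  rewrite (Series_incr_1 (fun k => T s (S k))).
  2: { apply (ex_series_incr_1 (T s)). apply ex_T; exact Hs. }
  unfold T at 1. rewrite L1.
  pose proof (tail_bound s 1 Hs) as H. rewrite L1 in H.
  rewrite (Series_ext _ (fun n => T s (S (n + 1)))).
  2: { intros n. rewrite Nat.add_1_r. reflexivity. }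
  assert (0 <= Series (fun n => T s (S (n + 1)))).
  { rewrite <- (Rmult_0_l (Series (T s))), <- Series_scal_l. apply Series_le.
    intros n; rewrite Rmult_0_l; split; [lra| left; apply T_pos].
    apply (ex_series_ext (fun k => T s (S (S k)))). intros n; rewrite Nat.add_1_r; reflexivity.
    apply (ex_series_incr_1 (fun k => T s (S k))). apply (ex_series_incr_1 (T s)). apply ex_T; exact Hs. }
  assert (T s 1 = exp (- s * ln 2)) as HT1 by (unfold T; rewrite L1; reflexivity). rewrite HT1 in *. lra.
Qed.

Lemma zeta_pos s : 1 < s -> 0 < zeta s.
Proof. intros Hs. pose proof (zeta_lower s Hs).
  assert (0 < 1 / (s-1)) by (apply Rdiv_lt_0_compat; lra). lra. Qed.

Lemma ex_scal c a : ex_series a -> ex_series (fun n => c * a n).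
Proof. intros H. exact (ex_series_scal_l c a H). Qed.

Lemma zeta_mid s t : 1 < s -> 1 < t -> zeta ((s+t)/2) ^ 2 <= zeta s * zeta t.
Proof.
  intros Hs Ht. set (m := (s+t)/2).
  assert (Hm : 1 < m) by (unfold m; lra).
  pose proof (zeta_pos s Hs). pose proof (zeta_pos t Ht). pose proof (zeta_pos m Hm).
  set (lam := zeta m / zeta s).
  assert (Hl : 0 < lam) by (apply Rdiv_lt_0_compat; lra).
  assert (Hle : zeta m <= / 2 * (lam * zeta s + / lam * zeta t)).
  { rewrite !zeta_T.
    rewrite <- !Series_scal_l, <- Series_plus, <- Series_scal_l.
    2: apply ex_scal, ex_T; lra.
    2: apply ex_scal, ex_T; lra.
    apply Series_le.
    - intros n. split. left; apply T_pos.
      assert (Hw : T m n ^ 2 = T s n * T t n).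
      { unfold T. rewrite <- exp_plus. simpl. rewrite Rmult_1_r, <- exp_plus. f_equal. unfold m. field. }
      pose proof (T_pos m n). pose proof (T_pos s n). pose proof (T_pos t n).
      set (w := T m n) in *. set (p := T s n) in *. set (q := T t n) in *.
      assert (Hk : 0 <= p * (lam * lam * p + q - 2 * lam * w)).
      { replace (p * (lam * lam * p + q - 2 * lam * w)) with ((lam * p - w)^2) by (simpl in Hw; nra).
        apply pow2_ge_0. }
      assert (0 <= lam * lam * p + q - 2 * lam * w).
      { destruct (Rle_or_lt 0 (lam * lam * p + q - 2 * lam * w)) as [?|Hc]; [assumption|].
        assert (p * (lam * lam * p + q - 2 * lam * w) < 0) by nra. lra. }
      assert (Hi : / lam * (lam * lam * p + q - 2 * lam * w) = lam * p + / lam * q - 2 * w) by (field; lra).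
      assert (0 <= / lam * (lam * lam * p + q - 2 * lam * w)).
      { apply Rmult_le_pos; [left; apply Rinv_0_lt_compat; lra | assumption]. }
      lra.
    - apply ex_scal. apply (ex_series_plus (fun n => lam * T s n) (fun n => / lam * T t n)).
      apply ex_scal, ex_T; lra. apply ex_scal, ex_T; lra. }
  assert (Hl2 : lam * zeta s = zeta m) by (unfold lam; field; lra).
  rewrite Hl2 in Hle.
  assert (Hi : / lam * zeta t = zeta s * zeta t / zeta m) by (unfold lam; field; lra).
  rewrite Hi in Hle.
  assert (zeta m <= zeta s * zeta t / zeta m) by lra.
  apply Rmult_le_compat_r with (r := zeta m) in H2; [|lra].
  unfold Rdiv in H2. rewrite Rmult_assoc, Rinv_l in H2 by lra. simpl. lra.
Qed.

Definition f s := ln (zeta s).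

Lemma f_mid s t : 1 < s -> 1 < t -> 2 * f ((s+t)/2) <= f s + f t.
Proof.
  intros Hs Ht. unfold f. pose proof (zeta_mid s t Hs Ht).
  assert (Hm : 1 < (s+t)/2) by lra.
  pose proof (zeta_pos _ Hs). pose proof (zeta_pos _ Ht). pose proof (zeta_pos _ Hm).
  rewrite <- ln_mult by lra.
  replace (2 * ln (zeta ((s+t)/2))) with (ln (zeta ((s+t)/2) ^ 2)).
  - apply ln_le. apply pow_lt; lra. exact H.
  - simpl. rewrite Rmult_1_r, ln_mult by lra. ring.
Qed.

Lemma f_bounds s : 1 < s -> - ln (s-1) <= f s <= (s-1) - ln (s-1).
Proof.
  intros Hs. unfold f. split.
  - rewrite <- ln_Rinv by lra. apply ln_le. apply Rinv_0_lt_compat; lra.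
    pose proof (zeta_lower s Hs). unfold Rdiv in H. lra.
  - pose proof (zeta_upper s Hs).
    assert (Hq : 1 + 1/(s-1) = s / (s-1)) by (field; intro; lra).
    rewrite Hq in H.
    apply Rle_trans with (ln (s / (s-1))).
    apply ln_le. apply zeta_pos; exact Hs. exact H.
    rewrite ln_div by lra. pose proof (ln_le_m1 s ltac:(lra)). lra.
Qed.

Definition g y h k := f (y + (INR k + 1) * h) - f (y + INR k * h).

Lemma g_mono y h k : 1 < y -> 0 < h -> g y h k <= g y h (S k).
Proof.
  intros Hy Hh. unfold g. rewrite S_INR.
  pose proof (pos_INR k).
  pose proof (f_mid (y + INR k * h) (y + (INR k + 1 + 1) * h) ltac:(nra) ltac:(nra)).
  replace ((y + INR k * h + (y + (INR k + 1 + 1) * h)) / 2) with (y + (INR k + 1) * h) in H0 by field.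
  lra.
Qed.

Lemma g_ge0 y h k : 1 < y -> 0 < h -> g y h 0 <= g y h k.
Proof.
  intros Hy Hh. induction k. lra. pose proof (g_mono y h k Hy Hh). lra.
Qed.

Lemma chain1 y h K : 1 < y -> 0 < h -> f (y + INR K * h) - f y <= INR K * g y h K.
Proof.
  intros Hy Hh. induction K.
  - simpl. replace (y + 0 * h) with y by ring. lra.
  - pose proof (g_mono y h K Hy Hh).
    assert (Hg : f (y + INR (S K) * h) = f (y + INR K * h) + g y h K).
    { unfold g. rewrite S_INR. ring. }
    rewrite Hg, S_INR. pose proof (pos_INR K).
    assert (INR K * g y h K <= INR K * g y h (S K)) by (apply Rmult_le_compat_l; lra).
    lra.
Qed.

Lemma chain2 y h K : 1 < y -> 0 < h -> INR K * g y h 0 <= f (y + (INR K + 1) * h) - f (y + h).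
Proof.
  intros Hy Hh. induction K.
  - simpl. replace ((0 + 1) * h) with h by ring. lra.
  - pose proof (g_ge0 y h (S K) Hy Hh).
    assert (Hg : f (y + (INR (S K) + 1) * h) = f (y + (INR K + 1) * h) + g y h (S K)).
    { unfold g. rewrite S_INR. ring. }
    rewrite Hg, S_INR. lra.
Qed.

Lemma incr0 (phi dphi : R -> R) u : 0 <= u ->
  (forall x, 0 <= x <= u -> is_derive phi x (dphi x)) ->
  (forall x, 0 <= x <= u -> 0 <= dphi x) -> phi 0 <= phi u.
Proof.
  intros Hu Hd Hp.
  destruct (MVT_gen phi 0 u dphi) as [c [Hc Heq]].
  - intros x Hx. rewrite Rmin_left, Rmax_right in Hx by lra. apply Hd. lra.
  - intros x Hx. rewrite Rmin_left, Rmax_right in Hx by lra.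
    apply continuity_pt_filterlim.
    apply (@ex_derive_continuous R_AbsRing R_NormedModule).
    eexists. apply Hd. lra.
  - rewrite Rmin_left, Rmax_right in Hc by lra.
    pose proof (Hp c Hc). nra.
Qed.

Lemma ln1_lo u : 0 <= u -> u - u^2/2 <= ln (1+u).
Proof.
  intros Hu.
  pose proof (incr0 (fun x => ln (1+x) - x + x^2/2) (fun x => x^2/(1+x)) u Hu) as H.
  simpl in H. rewrite Rplus_0_r, ln_1 in H.
  assert (0 <= ln (1 + u) - u + u * (u * 1) / 2). 2: { simpl; lra. }
  replace (0 * (0 * 1) / 2) with 0 in H by field. 
  replace (0 - 0 + 0) with 0 in H by ring.
  apply H.
  - intros x Hx. auto_derive. lra. field. lra.
  - intros x Hx. apply Rmult_le_pos. nra. left; apply Rinv_0_lt_compat; lra.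
Qed.

Lemma ln1_hi u : 0 <= u -> ln (1+u) <= u - u^2/2 + u^3/3.
Proof.
  intros Hu.
  pose proof (incr0 (fun x => x - x^2/2 + x^3/3 - ln (1+x)) (fun x => x^3/(1+x)) u Hu) as H.
  simpl in H. rewrite Rplus_0_r, ln_1 in H.
  assert (0 <= u - u * (u * 1) / 2 + u * (u * (u * 1)) / 3 - ln (1 + u)). 2: { simpl; lra. }
  replace (0 - 0 * (0 * 1) / 2 + 0 * (0 * (0 * 1)) / 3 - 0) with 0 in H by field.
  apply H.
  - intros x Hx. auto_derive. lra. field. lra.
  - intros x Hx. apply Rmult_le_pos. simpl. assert (0 <= x*x) by nra. nra. left; apply Rinv_0_lt_compat; lra.
Qed.

Lemma ln1_le u : 0 <= u -> ln (1+u) <= u.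
Proof. intros Hu. pose proof (ln_le_m1 (1+u) ltac:(lra)). lra. Qed.

Lemma lnm z : 0 <= z <= 1/2 -> - ln (1 - z) <= z + 2 * z^2.
Proof.
  intros Hz. rewrite <- ln_Rinv by lra.
  pose proof (ln_le_m1 (/ (1-z)) ltac:(apply Rinv_0_lt_compat; lra)).
  assert (/ (1-z) - 1 = z / (1-z)) by (field; intro; lra).
  assert (z / (1-z) <= z + 2 * z^2).
  { apply Rmult_le_reg_r with (1-z). lra. unfold Rdiv. rewrite Rmult_assoc, Rinv_l by lra. nra. }
  lra.
Qed.

Definition Dd u := f (1 + ln (1+u)) - f (1+u).

Lemma key K u : (1 <= K)%nat -> 0 < u <= 1/2 -> u * INR K <= 1/2 ->
  u * (1/2 - 1 / INR K - 3 * (INR K + 1) * u) <= Dd u <= u * (1/2 + 1 / INR K + 3 * (INR K + 1) * u).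
Proof.
  intros HK Hu Hku.
  assert (Hk : 1 <= INR K) by (change 1 with (INR 1); apply le_INR; exact HK).
  set (k := INR K) in *.
  set (a := ln (1+u)).
  pose proof (ln1_lo u ltac:(lra)) as Ha1. pose proof (ln1_hi u ltac:(lra)) as Ha2.
  pose proof (ln1_le u ltac:(lra)) as Ha3. fold a in Ha1, Ha2, Ha3.
  set (h := u - a).
  assert (Hu2 : 0 < u^2) by nra.
  assert (Hu3 : 0 <= u^3) by (simpl; nra).
  assert (Hh1 : u^2/2 - u^3/3 <= h) by (unfold h; lra).
  assert (Hh2 : h <= u^2/2) by (unfold h; lra).
  assert (Hhp : 0 < h).
  { assert (u^3 <= u^2 / 2) by (simpl; nra). lra. }
  assert (Hap : 0 < a) by (simpl in Ha1; nra).
  assert (Hha : h <= (u/2 + u^2/2) * a).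
  { assert ((u/2 + u^2/2) * (u - u^2/2) - u^2/2 = u^3/4 - u^4/4) by (simpl; field).
    assert (u^4 <= u^3) by (simpl; nra).
    assert ((u/2 + u^2/2) * (u - u^2/2) <= (u/2 + u^2/2) * a) by (apply Rmult_le_compat_l; simpl; nra).
    lra. }
  set (z := k * h / a).
  assert (Hz0 : 0 <= z) by (unfold z; apply Rdiv_le_0_compat; nra).
  assert (Hz1 : z <= k * (u/2 + u^2/2)).
  { unfold z. apply Rmult_le_reg_r with a; [lra|]. unfold Rdiv. rewrite Rmult_assoc, Rinv_l by lra.
    nra. }
  assert (Hz2 : z <= k * u) by (simpl in Hz1; nra).
  assert (Hzh : k * h = z * a) by (unfold z; field; lra).
  set (w := k * h / u).
  assert (Hwh : k * h = w * u) by (unfold w; field; lra).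
  assert (Hw0 : 0 <= w) by (unfold w; apply Rdiv_le_0_compat; nra).
  assert (Hw1 : k * (u/2 - u^2/3) <= w).
  { apply Rmult_le_reg_r with u; [lra|]. rewrite <- Hwh. simpl in Hh1 |- *. nra. }
  assert (Hw2 : w <= k * u / 2).
  { apply Rmult_le_reg_r with u; [lra|]. rewrite <- Hwh. simpl in Hh2 |- *. nra. }
  split.
  -
    pose proof (chain2 (1 + a) h K ltac:(lra) Hhp) as C.
    unfold g in C. fold k in C. simpl INR in C.
    replace (1 + a + (0 + 1) * h) with (1 + u) in C by (unfold h; ring).
    replace (1 + a + 0 * h) with (1 + a) in C by ring.
    replace (1 + a + (k + 1) * h) with (1 + (u + k * h)) in C by (unfold h; ring).
    pose proof (f_bounds (1 + u) ltac:(lra)) as [F1 _].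
    pose proof (f_bounds (1 + (u + k*h)) ltac:(nra)) as [_ F2].
    replace (1 + u - 1) with u in F1 by ring.
    replace (1 + (u + k*h) - 1) with (u + k*h) in F2 by ring.
    assert (Hl : ln (u + k * h) = ln u + ln (1 + w)).
    { rewrite <- ln_mult by nra. f_equal. rewrite Hwh. ring. }
    pose proof (ln1_lo w Hw0) as Lw.
    replace (1 + a + h) with (1 + u) in C by (unfold h; ring).
    rewrite Hl in F2.
    assert (HkD : k * Dd u >= w - w^2/2 - u - k * h) by (unfold Dd; fold a; lra).
    assert (Hw2sq : w^2 <= (k*u/2)^2) by (apply pow_incr; lra).
    assert (Hkh : k * h <= k * (u^2/2)) by (apply Rmult_le_compat_l; lra).
    assert (k * (u * (1/2 - 1/k - 3*(k+1)*u)) <= k * Dd u).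
    { replace (k * (u * (1/2 - 1/k - 3*(k+1)*u))) with (k*u/2 - u - 3*k*(k+1)*u^2) by (field; lra).
      simpl in *. nra. }
    apply Rmult_le_reg_l with k; lra.
  -
    assert (Hy : 0 < a - k * h) by (rewrite Hzh; nra).
    pose proof (chain1 (1 + a - k*h) h K ltac:(lra) Hhp) as C.
    unfold g in C. fold k in C.
    replace (1 + a - k * h + k * h) with (1 + a) in C by ring.
    replace (1 + a - k * h + (k + 1) * h) with (1 + u) in C by (unfold h; ring).
    pose proof (f_bounds (1 + a) ltac:(lra)) as [F1 _].
    pose proof (f_bounds (1 + a - k*h) ltac:(lra)) as [_ F2].
    replace (1 + a - 1) with a in F1 by ring.
    replace (1 + a - k*h - 1) with (a - k*h) in F2 by ring.
    assert (Hl : ln (a - k * h) = ln a + ln (1 - z)).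
    { rewrite <- ln_mult by nra. f_equal. rewrite Hzh. ring. }
    pose proof (lnm z ltac:(nra)) as Lz.
    assert (HkD : k * Dd u <= a - k*h + z + 2 * z^2) by (unfold Dd; fold a; nra).
    assert (Hz2sq : z^2 <= (k*u)^2) by (apply pow_incr; lra).
    assert (k * Dd u <= k * (u * (1/2 + 1/k + 3*(k+1)*u))).
    { replace (k * (u * (1/2 + 1/k + 3*(k+1)*u))) with (k*u/2 + u + 3*k*(k+1)*u^2) by (field; lra).
      simpl in *. nra. }
    apply Rmult_le_reg_l with k; lra.
Qed.

Theorem mainTheorem8 :
  is_lim
    (fun x : R => Rpower 2 x * (ln (zeta (ln (zeta x) + 1)) - ln (zeta (zeta x))))
    p_infty (1 / 2).
Proof.
  apply is_lim_spec. intros eps. pose proof (cond_pos eps) as Heps.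
  set (e := Rmin (eps/4) (1/8)).
  assert (He0 : 0 < e) by (unfold e; apply Rmin_glb_lt; lra).
  assert (He1 : e <= eps/4) by (unfold e; apply Rmin_l).
  assert (He2 : e <= 1/8) by (unfold e; apply Rmin_r).
  destruct (INR_unbounded (1/e + 1)) as [K HK].
  assert (He' : 0 < 1/e) by (apply Rdiv_lt_0_compat; lra).
  assert (HK1 : (1 <= K)%nat).
  { destruct K. simpl in HK. lra. lia. }
  set (k := INR K) in *.
  assert (Hk1 : 1 <= k) by (unfold k; change 1 with (INR 1); apply le_INR; exact HK1).
  assert (Hke : 1 / k <= e).
  { apply Rmult_le_reg_r with k. lra. unfold Rdiv. rewrite Rmult_1_l, Rinv_l by lra.
    apply Rmult_lt_compat_r with (r := e) in HK; [|lra].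
    unfold Rdiv in HK. rewrite Rmult_plus_distr_r, Rmult_1_l, Rinv_l in HK by lra. lra. }
  set (eta := Rmin (1/2) (Rmin (1/(2*k)) (e / (3*(k+1))))).
  assert (Heta0 : 0 < eta).
  { unfold eta. apply Rmin_glb_lt. lra. apply Rmin_glb_lt; apply Rdiv_lt_0_compat; lra. }
  assert (Heta1 : eta <= 1/2) by (unfold eta; apply Rmin_l).
  assert (Heta2 : eta <= 1/(2*k)) by (unfold eta; eapply Rle_trans; [apply Rmin_r| apply Rmin_l]).
  assert (Heta3 : eta <= e / (3*(k+1))) by (unfold eta; eapply Rle_trans; [apply Rmin_r| apply Rmin_r]).
  exists (3 + 12/eta + 2/e). intros x Hx.
  assert (H12 : 0 < 12/eta) by (apply Rdiv_lt_0_compat; lra).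
  assert (H2e : 0 < 2/e) by (apply Rdiv_lt_0_compat; lra).
  assert (Hx1 : 1 < x) by lra.
  pose proof (zeta_two x Hx1) as [Z1 Z2].
  set (u := zeta x - 1) in *.
  set (E := exp (x * ln 2)).
  assert (HEi : E * exp (- x * ln 2) = 1).
  { unfold E. rewrite <- exp_plus. replace (x * ln 2 + - x * ln 2) with 0 by ring. apply exp_0. }
  assert (Hexp2 : exp (- (x-1) * ln 2) = 2 * exp (- x * ln 2)).
  { replace (- (x-1) * ln 2) with (ln 2 + - x * ln 2) by ring. rewrite exp_plus, exp_ln by lra. ring. }
  rewrite Hexp2 in Z2.
  pose proof (exp_pos (- x * ln 2)) as Hep.
  set (q := exp (- x * ln 2)) in *.
  assert (HE0 : 0 < E) by apply exp_pos.
  assert (HP1 : 1 <= E * u) by (rewrite <- HEi; apply Rmult_le_compat_l; lra).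
  assert (Hx1' : 2 / (x-1) <= e).
  { apply Rmult_le_reg_r with (x-1). lra. unfold Rdiv. rewrite Rmult_assoc, Rinv_l by lra.
    apply Rmult_le_reg_r with (/ e). apply Rinv_0_lt_compat; lra.
    rewrite Rmult_1_r. replace (e * (x-1) * / e) with (x - 1) by (field; lra).
    unfold Rdiv in H2e. lra. }
  assert (Hq2 : 2 * q / (x-1) <= q * e).
  { replace (2 * q / (x-1)) with (q * (2 / (x-1))) by (field; lra). apply Rmult_le_compat_l; lra. }
  assert (HP2 : E * u <= 1 + e).
  { apply Rle_trans with (E * (q + q * e)). apply Rmult_le_compat_l; lra.
    replace (E * (q + q * e)) with ((E * q) * (1 + e)) by ring. rewrite HEi. lra. }
  assert (Hln2 := ln_lt_2).
  assert (HEx : x / 2 <= E).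
  { unfold E. pose proof (exp_ineq1_le (x * ln 2)). nra. }
  assert (Hu0 : 0 < u) by lra.
  assert (Hueta : u <= eta).
  { assert (Hq : q * E = 1) by lra.
    assert (u <= 2 * q) by nra.
    assert (q * (x/2) <= 1) by nra.
    assert (12/eta < x) by lra.
    assert (12 < x * eta).
    { apply Rmult_lt_compat_r with (r := eta) in H1; [|lra]. unfold Rdiv in H1.
      rewrite Rmult_assoc, Rinv_l in H1 by lra. lra. }
    nra. }
  assert (Huk : u * k <= 1/2).
  { apply Rle_trans with (1/(2*k) * k). apply Rmult_le_compat_r; lra.
    right. field. lra. }
  pose proof (key K u HK1 ltac:(lra) Huk) as [D1 D2].
  fold k in D1, D2.
  assert (Hsm : 3 * (k+1) * u <= e).
  { apply Rle_trans with (3*(k+1)*eta). apply Rmult_le_compat_l; lra.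
    apply Rmult_le_compat_l with (r := 3*(k+1)) in Heta3; [|lra].
    replace (3 * (k+1) * (e / (3*(k+1)))) with e in Heta3 by (field; lra). lra. }
  assert (D1' : u * (1/2 - 2*e) <= Dd u).
  { eapply Rle_trans; [|exact D1]. apply Rmult_le_compat_l; lra. }
  assert (D2' : Dd u <= u * (1/2 + 2*e)).
  { eapply Rle_trans; [exact D2|]. apply Rmult_le_compat_l; lra. }
  assert (Hrw : Rpower 2 x * (ln (zeta (ln (zeta x) + 1)) - ln (zeta (zeta x))) = E * Dd u).
  { unfold Rpower, E, Dd, f, u. f_equal.
    replace (1 + (zeta x - 1)) with (zeta x) by ring.
    replace (1 + ln (zeta x)) with (ln (zeta x) + 1) by ring. reflexivity. }
  rewrite Hrw.
  assert (E * (u * (1/2 - 2*e)) <= E * Dd u) by (apply Rmult_le_compat_l; lra).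
  assert (E * Dd u <= E * (u * (1/2 + 2*e))) by (apply Rmult_le_compat_l; lra).
  set (P := E * u) in *.
  assert (E * (u * (1/2 - 2*e)) = P * (1/2 - 2*e)) by (unfold P; ring).
  assert (E * (u * (1/2 + 2*e)) = P * (1/2 + 2*e)) by (unfold P; ring).
  apply Rabs_def1; nra.
Qed.
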